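(* Let $\mathfrak h\subseteq\Phi^+$ be a Hessenberg set and let $v,w\in W$ with $v$ a cover of $w$. Then $|N_v|-|\Phi^+\setminus\mathfrak h|\le|N^{\mathfrak h}_v|\le|N^{\mathfrak h}_w|+1$.
   Context: $\Phi$ is a crystallographic root system in a real Euclidean space with base $\Delta$, positive roots $\Phi^+$, $\Phi^-=-\Phi^+$, Weyl group $W$ with length $\ell$, and $s_\alpha$ the reflection through $\alpha$. Write $\alpha\prec\beta$ if $\beta-\alpha$ is a sum of positive roots. A Hessenberg set is a subset $\mathfrak h\subseteq\Phi^+$ whose complement in $\Phi^+$ is upward closed for $\prec$. For $w\in W$, $N_w=\{\beta\in\Phi^+: w^{-1}\beta\in\Phi^-\}$ and $N^{\mathfrak h}_w=\{\beta\in\Phi^+: w^{-1}\beta\in-\mathfrak h\}$. We say $v$ is a cover of $w$ if $v=s_\alpha w$ for some $\alpha\in\Phi^+$ with $v^{-1}\alpha\in\Phi^-$ and $\ell(v)=\ell(w)+1$. *)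

(* Defs.v *)
From HB Require Import structures.
From mathcomp Require Import all_boot all_order all_algebra.
From mathcomp Require Import boolp reals.
Set Implicit Arguments. Unset Strict Implicit. Unset Printing Implicit Defensive.
Import Order.TTheory GRing.Theory Num.Theory.
Local Open Scope ring_scope.

(* The Euclidean space is R^n (column vectors 'cV[R]_n) with the standard   *)
(* inner product; linear maps (in particular Weyl group elements) are       *)
(* n x n matrices acting by left multiplication.                            *)
Section RootSystems.
Variables (R : realType) (n : nat).
Local Notation V := 'cV[R]_n.

Definition dotp (a b : V) : R := \sum_(i < n) a i 0 * b i 0.

(* reflection through a : s_a(x) = x - (2 (a,x)/(a,a)) a *)
Definition refl (a : V) : 'M[R]_n := 1%:M - (2 / dotp a a) *: (a *m a^T).

Definition root_system (Phi : seq V) : Prop :=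
  [/\ uniq Phi /\ 0 \notin Phi,
      (forall v : V, exists c : V -> R, v = \sum_(a <- Phi) c a *: a),
      (forall a b, a \in Phi -> b \in Phi -> refl a *m b \in Phi),
      (forall a b, a \in Phi -> b \in Phi -> (2 * dotp a b / dotp a a) \is a Num.int)
    & (forall a (c : R), a \in Phi -> c *: a \in Phi -> c = 1 \/ c = -1)].

Definition int_comb (Delta : seq V) (c : V -> int) : V :=
  \sum_(a <- Delta) (c a)%:~R *: a.

Definition is_base (Phi Delta : seq V) : Prop :=
  [/\ uniq Delta,
      {subset Delta <= Phi},
      (forall c : V -> R, \sum_(a <- Delta) c a *: a = 0 ->
          forall a, a \in Delta -> c a = 0)
    & (forall b, b \in Phi -> exists c : V -> int, b = int_comb Delta c /\
          ((forall a, a \in Delta -> 0 <= c a) \/ (forall a, a \in Delta -> c a <= 0)))].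

Definition is_pos (Delta : seq V) (b : V) : Prop :=
  exists c : V -> int, (forall a, a \in Delta -> 0 <= c a) /\ b = int_comb Delta c.

Definition posroots (Phi Delta : seq V) : seq V :=
  [seq b <- Phi | `[< is_pos Delta b >]].

Definition negroot (Phi Delta : seq V) (b : V) : bool := - b \in posroots Phi Delta.

Definition prec (Phi Delta : seq V) (a b : V) : Prop :=
  exists s : seq V, {subset s <= posroots Phi Delta} /\ b - a = \sum_(x <- s) x.

Definition hessenberg (Phi Delta : seq V) (h : pred V) : Prop :=
  {subset h <= posroots Phi Delta} /\
  (forall a b, a \in posroots Phi Delta -> b \in posroots Phi Delta ->
     ~~ h a -> prec Phi Delta a b -> ~~ h b).

Definition prod_refl (s : seq V) : 'M[R]_n := foldr (fun a M => refl a *m M) 1%:M s.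

Definition in_weyl (Phi : seq V) (w : 'M[R]_n) : Prop :=
  exists s : seq V, {subset s <= Phi} /\ w = prod_refl s.

Definition weyl_length (Delta : seq V) (w : 'M[R]_n) (k : nat) : Prop :=
  (exists s : seq V, {subset s <= Delta} /\ size s = k /\ w = prod_refl s) /\
  (forall s : seq V, {subset s <= Delta} -> w = prod_refl s -> (k <= size s)%N).

Definition Nset (Phi Delta : seq V) (w : 'M[R]_n) : seq V :=
  [seq b <- posroots Phi Delta | negroot Phi Delta (invmx w *m b)].

Definition Nhset (Phi Delta : seq V) (h : pred V) (w : 'M[R]_n) : seq V :=
  [seq b <- posroots Phi Delta | h (- (invmx w *m b))].

Definition is_cover (Phi Delta : seq V) (v w : 'M[R]_n) : Prop :=
  exists a, [/\ a \in posroots Phi Delta, v = refl a *m w,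
     negroot Phi Delta (invmx v *m a) &
     exists k, weyl_length Delta w k /\ weyl_length Delta v k.+1].

End RootSystems.

(* Main.v *)
Require Import Defs.
From HB Require Import structures.
From mathcomp Require Import all_boot all_order all_algebra.
From mathcomp Require Import boolp reals.
From mathcomp Require Import ring lra zify.
Import Order.TTheory GRing.Theory Num.Theory.
Local Open Scope ring_scope.
Set Implicit Arguments. Unset Strict Implicit. Unset Printing Implicit Defensive.

Section Basic.
Variables (R : realType) (n : nat).
Local Notation V := 'cV[R]_n.

Lemma dotpE (a b : V) : dotp a b = (a^T *m b) 0 0.
Proof. rewrite /dotp !mxE; apply: eq_bigr => k _; by rewrite mxE. Qed.

Lemma trmx_dot (a b : V) : a^T *m b = (dotp a b)%:M.
Proof. apply/matrixP => i j; by rewrite !ord1 [RHS]mxE eqxx mulr1n dotpE. Qed.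

Lemma reflE (a b : V) : refl a *m b = b - (2 * dotp a b / dotp a a) *: a.
Proof.
rewrite /refl mulmxBl mul1mx -scalemxAl -mulmxA trmx_dot mul_mx_scalar.
by rewrite scalerA mulrAC.
Qed.

Lemma refl_sym (a : V) : (refl a)^T = refl a.
Proof. by rewrite /refl linearB /= linearZ /= trmx1 trmx_mul trmxK. Qed.

Lemma refl_inv (a : V) : dotp a a != 0 -> refl a *m refl a = 1%:M.
Proof.
move=> nz; set c := 2 / dotp a a; set U := a *m a^T.
have UU : U *m U = dotp a a *: U.
  by rewrite /U mulmxA -(mulmxA a) trmx_dot mul_mx_scalar -scalemxAl.
rewrite /refl -/c -/U mulmxBl mul1mx mulmxBr mulmx1 -scalemxAl -scalemxAr UU scalerA.
rewrite scalerA.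
have -> : c * c * dotp a a = c + c by rewrite /c; field.
by rewrite scalerDl opprB addrK subrK.
Qed.

Lemma refl_self (a : V) : dotp a a != 0 -> refl a *m a = - a.
Proof.
move=> nz; rewrite reflE mulfK // scaler_nat mulr2n opprD addrA subrr add0r //.
Qed.

Lemma refl_conjX (X : 'M[R]_n) (c : V) : X^T = X -> X *m X = 1%:M ->
  refl (X *m c) = X *m refl c *m X.
Proof.
move=> sX iX.
have dd : dotp (X *m c) (X *m c) = dotp c c.
  by rewrite !dotpE trmx_mul sX -!mulmxA (mulmxA X) iX mul1mx.
rewrite /refl dd mulmxBr mulmx1 mulmxBl iX.
congr (_ - _).
rewrite -scalemxAr -scalemxAl; congr (_ *: _).
by rewrite trmx_mul sX !mulmxA.
Qed.

Lemma refl_conj (b c : V) : dotp b b != 0 ->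
  refl (refl b *m c) = refl b *m refl c *m refl b.
Proof. move=> nz; apply: refl_conjX; [exact: refl_sym | exact: refl_inv]. Qed.

Lemma dotp_eq0 (a : V) : dotp a a = 0 -> a = 0.
Proof.
move=> H; apply/matrixP => i j; rewrite ord1 mxE.
have ge : forall k : 'I_n, predT k -> 0 <= a k 0 * a k 0.
  by move=> k _; rewrite -expr2 sqr_ge0.
have /eqP := psumr_eq0P ge H (i:=i) isT.
by rewrite mulf_eq0 orbb => /eqP.
Qed.

End Basic.

Lemma perm_inv (T : eqType) (f : T -> T) (s : seq T) : cancel f f -> uniq s ->
  (forall y, y \in s -> f y \in s) -> perm_eq (map f s) s.
Proof.
move=> fK us cl; apply: uniq_perm => //.
  by rewrite map_inj_uniq //; exact: can_inj fK.
move=> y; apply/mapP/idP => [[x xs ->]|ys]; first exact: cl.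
by exists (f y); [exact: cl | rewrite fK].
Qed.

Lemma count_inv (T : eqType) (f : T -> T) (s : seq T) (p : pred T) : cancel f f -> uniq s ->
  (forall y, y \in s -> f y \in s) -> count (fun x => p (f x)) s = count p s.
Proof.
move=> fK us cl; rewrite -(count_map f p).
by move/permP: (perm_inv fK us cl) => ->.
Qed.

Lemma count_split (T : Type) (a b : pred T) (s : seq T) :
  (count a s = count (predI a b) s + count (predI a (predC b)) s)%N.
Proof. elim: s => //= x s ->; case: (a x) (b x) => [] [] /=; lia. Qed.

Lemma sub_in_count (T : eqType) (a b : pred T) (s : seq T) :
  {in s, forall x, a x -> b x} -> (count a s <= count b s)%N.
Proof.
elim: s => //= x s IH H.
have H' : {in s, forall x, a x -> b x} by move=> y ys; apply: H; rewrite inE ys orbT.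
have := IH H'; have := H x (mem_head _ _).
case: (a x) (b x) => [] [] //=; try lia; by move=> /(_ isT).
Qed.

Lemma count_rem (T : eqType) (p : pred T) (s : seq T) (x : T) : x \in s ->
  (count p s = p x + count p (rem x s))%N.
Proof. by move=> xs; move/permP: (perm_to_rem xs) => ->. Qed.

Lemma sum_single (R : realType) (n : nat) (D : seq 'cV[R]_n) (a : 'cV[R]_n)
  (F : 'cV[R]_n -> 'cV[R]_n) : uniq D -> a \in D ->
  (forall z, z \in D -> z != a -> F z = 0) -> \sum_(z <- D) F z = F a.
Proof.
move=> uD aD H; rewrite (big_rem a) //= big_seq big1 ?addr0 // => z.
by rewrite mem_rem_uniq // inE => /andP[za zD]; apply: H.
Qed.

Section RS.
Variables (R : realType) (n : nat) (Phi Delta : seq 'cV[R]_n).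
Hypothesis RS : root_system Phi.
Hypothesis BS : is_base Phi Delta.
Local Notation V := 'cV[R]_n.
Local Notation P := (posroots Phi Delta).
Local Notation ic := (int_comb Delta).

Lemma uniqP : uniq P.
Proof. case: RS => [[u _] _ _ _ _]; exact: filter_uniq. Qed.

Lemma zeroNPhi : (0 : V) \notin Phi.
Proof. by case: RS => [[_ z] _ _ _ _]. Qed.

Lemma Phi_refl a b : a \in Phi -> b \in Phi -> refl a *m b \in Phi.
Proof. by case: RS => _ _ H _ _; apply: H. Qed.

Lemma Phi_nz a : a \in Phi -> dotp a a != 0.
Proof.
move=> aP; apply/eqP => /dotp_eq0 H; move: aP; rewrite H.
by move/negP: zeroNPhi.
Qed.

Lemma Phi_opp a : a \in Phi -> - a \in Phi.
Proof. by move=> aP; rewrite -(refl_self (Phi_nz aP)); apply: Phi_refl. Qed.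

Lemma memP b : (b \in P) = (b \in Phi) && `[< is_pos Delta b >].
Proof. by rewrite mem_filter andbC. Qed.

Lemma P_Phi b : b \in P -> b \in Phi.
Proof. by rewrite memP => /andP[]. Qed.

Lemma P_pos b : b \in P -> is_pos Delta b.
Proof. by rewrite memP => /andP[_ /asboolP]. Qed.

Lemma uniqD : uniq Delta.
Proof. by case: BS. Qed.

Lemma Delta_Phi a : a \in Delta -> a \in Phi.
Proof. by case: BS => _ H _ _; apply: H. Qed.

Lemma ic_add c d : ic c + ic d = ic (fun x => c x + d x).
Proof.
by rewrite /int_comb -big_split; apply: eq_bigr => x _; rewrite intrD scalerDl.
Qed.

Lemma ic_opp c : - ic c = ic (fun x => - c x).
Proof.
by rewrite /int_comb -sumrN; apply: eq_bigr => x _; rewrite intrN scaleNr.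
Qed.

Lemma ic_nat (k : nat) c : k%:R *: ic c = ic (fun x => k%:Z * c x).
Proof.
rewrite /int_comb scaler_sumr; apply: eq_bigr => x _.
by rewrite scalerA intrM.
Qed.

Lemma ic_zero : ic (fun _ => 0) = 0.
Proof. by rewrite /int_comb big1 // => x _; rewrite scale0r. Qed.

Lemma is_pos_add x y : is_pos Delta x -> is_pos Delta y -> is_pos Delta (x + y).
Proof.
move=> [c [c0 ->]] [d [d0 ->]]; exists (fun x => c x + d x); split.
  by move=> a aD; rewrite addr_ge0 ?c0 ?d0.
by rewrite ic_add.
Qed.

Lemma is_pos_nat (k : nat) x : is_pos Delta x -> is_pos Delta (k%:R *: x).
Proof.
move=> [c [c0 ->]]; exists (fun x => k%:Z * c x); split.
  by move=> a aD; rewrite mulr_ge0 ?c0.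
by rewrite ic_nat.
Qed.

Lemma ic_indep c : ic c = 0 -> forall a, a \in Delta -> c a = 0.
Proof.
case: BS => _ _ ind _ H a aD.
have := ind (fun x => (c x)%:~R) H a aD.
by move/eqP; rewrite intr_eq0 => /eqP.
Qed.

Lemma pos_neg0 x : is_pos Delta x -> is_pos Delta (- x) -> x = 0.
Proof.
move=> [c [c0 xE]] [d [d0 nxE]].
have H : ic (fun x => c x + d x) = 0 by rewrite -ic_add -xE -nxE subrr.
rewrite xE /int_comb big_seq big1 // => a aD.
have := ic_indep H aD; have := c0 a aD; have := d0 a aD.
move=> h1 h2 h3; have -> : c a = 0 by lia.
by rewrite scale0r.
Qed.

Lemma Delta_P a : a \in Delta -> a \in P.
Proof.
move=> aD; rewrite memP Delta_Phi //=; apply/asboolP.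
exists (fun x => (x == a)%:Z); split; first by move=> x _; case: (x == a).
rewrite /int_comb (@sum_single _ _ _ a) ?uniqD // ?eqxx ?scale1r //.
by move=> z _ /negbTE ->; rewrite scale0r.
Qed.

Lemma root_dich b : b \in Phi -> (b \in P) || negroot Phi Delta b.
Proof.
move=> bP; case: BS => _ _ _ H; have [c [bE [c0|c0]]] := H b bP.
  by rewrite memP bP /=; apply/orP; left; apply/asboolP; exists c.
apply/orP; right; rewrite /negroot memP Phi_opp //=; apply/asboolP.
exists (fun x => - c x); split; first by move=> a aD; rewrite oppr_ge0 c0.
by rewrite bE ic_opp.
Qed.

Lemma root_excl b : b \in P -> negroot Phi Delta b -> False.
Proof.
move=> bP nb; have := pos_neg0 (P_pos bP) (P_pos nb) => b0.
by move: (P_Phi bP); rewrite b0; move/negP: zeroNPhi.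
Qed.


Lemma simple_refl_pos a b : a \in Delta -> b \in P -> b != a -> refl a *m b \in P.
Proof.
move=> aD bP ba.
have aPhi := Delta_Phi aD; have bPhi := P_Phi bP.
have sPhi : refl a *m b \in Phi by apply: Phi_refl.
have /orP[//|nb] := root_dich sPhi.
exfalso.
set m := 2 * dotp a b / dotp a a.
have sE : refl a *m b = b - m *: a by rewrite reflE.
have [c [c0 bE]] := P_pos bP.
have [d [d0 dE]] := P_pos nb.
have H1 : ic (fun x => c x + d x) = m *: a.
  by rewrite -ic_add -bE -dE sE opprB addrC subrK.
case: BS => _ _ ind _.
have S0 : \sum_(x <- Delta) ((c x + d x)%:~R - (x == a)%:R * m) *: x = 0.
  under eq_bigr do rewrite scalerBl.
  rewrite sumrB.
  rewrite -[\sum_(x <- Delta) (c x + d x)%:~R *: x]/(ic (fun x => c x + d x)) H1.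
  rewrite (@sum_single _ _ _ a) ?uniqD // ?eqxx ?mul1r ?subrr //.
  by move=> z _ /negbTE ->; rewrite mul0r scale0r.
have key : forall z, z \in Delta -> z != a -> c z = 0.
  move=> z zD za.
  have := ind _ S0 z zD.
  rewrite (negbTE za) mul0r subr0 => /eqP; rewrite intr_eq0 => /eqP.
  have := c0 z zD; have := d0 z zD; lia.
have bE' : b = (c a)%:~R *: a.
  rewrite bE /int_comb (@sum_single _ _ _ a) ?uniqD //.
  by move=> z zD za; rewrite key // scale0r.
case: RS => _ _ _ _ red.
have := red a (c a)%:~R aPhi; rewrite -bE' => /(_ bPhi) [] H.
  by move: ba; rewrite bE' H scale1r eqxx.
have := c0 a aD; rewrite -(ler0z R) H; lra.
Qed.

Lemma refl_neg_k a b : a \in P -> b \in P -> negroot Phi Delta (refl a *m b) ->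
  exists k : nat, (0 < k)%N /\ refl a *m b = b - k%:R *: a.
Proof.
move=> aP bP nb.
have aPhi := P_Phi aP; have bPhi := P_Phi bP.
case: RS => _ _ _ cr _.
have /intrP [z zE] := cr a b aPhi bPhi.
have sE : refl a *m b = b - z%:~R *: a by rewrite reflE zE.
case: z zE sE => k zE sE.
  case: k zE sE => [|k] zE sE.
    exfalso; move: nb; rewrite sE scale0r subr0 => nb; exact: root_excl bP nb.
  by exists k.+1.
exfalso.
move: sE; rewrite NegzE intrN scaleNr opprK => sE.
have p1 : is_pos Delta (refl a *m b).
  by rewrite sE; apply: is_pos_add; [exact: P_pos | apply: is_pos_nat; exact: P_pos].
have := pos_neg0 p1 (P_pos nb) => s0.
by move: (Phi_refl aPhi bPhi); rewrite s0; move/negP: zeroNPhi.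
Qed.


Lemma prod_cons (a : V) (s : seq V) : prod_refl (a :: s) = refl a *m prod_refl s.
Proof. by []. Qed.

Lemma sub_tail (T : eqType) (a : T) s (A : seq T) :
  {subset a :: s <= A} -> {subset s <= A}.
Proof. by move=> H x xs; apply: H; rewrite inE xs orbT. Qed.

Lemma word_orth s : {subset s <= Phi} -> (prod_refl s)^T *m prod_refl s = 1%:M.
Proof.
elim: s => [|a s IH] sub; first by rewrite /= trmx1 mulmx1.
have aP : a \in Phi by apply: sub; rewrite mem_head.
rewrite prod_cons trmx_mul refl_sym -mulmxA (mulmxA (refl a)) (refl_inv (Phi_nz aP)).
by rewrite mul1mx IH //; apply: sub_tail sub.
Qed.

Lemma word_tr_Phi s b : {subset s <= Phi} -> b \in Phi -> (prod_refl s)^T *m b \in Phi.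
Proof.
elim: s b => [|a s IH] b sub bP; first by rewrite /= trmx1 mul1mx.
have aP : a \in Phi by apply: sub; rewrite mem_head.
rewrite prod_cons trmx_mul refl_sym -mulmxA; apply: IH; first exact: sub_tail sub.
exact: Phi_refl.
Qed.

Definition Ncount (x : 'M[R]_n) := count (fun b => negroot Phi Delta (x^T *m b)) P.

Lemma reflK a : a \in Phi -> cancel (fun b : V => refl a *m b) (fun b => refl a *m b).
Proof. by move=> aP b; rewrite mulmxA (refl_inv (Phi_nz aP)) mul1mx. Qed.

Lemma N_step a s : a \in Delta -> {subset s <= Phi} ->
  (Ncount (refl a *m prod_refl s) + negroot Phi Delta ((prod_refl s)^T *m a)
     + negroot Phi Delta ((prod_refl s)^T *m a) = (Ncount (prod_refl s)).+1)%N.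
Proof.
move=> aD sub; set y := prod_refl s.
have aP := Delta_P aD; have aPhi := Delta_Phi aD.
have ya : y^T *m a \in Phi := word_tr_Phi sub aPhi.
have Eq1 : Ncount (refl a *m y) =
    count (fun b => negroot Phi Delta (y^T *m (refl a *m b))) P.
  by apply: eq_count => b; rewrite /= trmx_mul refl_sym mulmxA.
rewrite Eq1 /Ncount (count_rem _ aP) [X in _ = X.+1](count_rem _ aP).
rewrite (@count_inv _ (fun b => refl a *m b) _ (fun b => negroot Phi Delta (y^T *m b))).
- rewrite /= refl_self ?(Phi_nz aPhi) // mulmxN /negroot opprK.
  move: (root_dich ya) (@root_excl (y^T *m a)); rewrite /negroot.
  case: (y^T *m a \in P); case: (- (y^T *m a) \in P) => //= _ H; try lia.
- by move=> b; exact: (reflK aPhi b).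
- by apply: rem_uniq; apply: uniqP.
move=> z; rewrite !mem_rem_uniq ?uniqP // !inE => /andP[za zP].
apply/andP; split; last exact: simple_refl_pos.
apply/eqP => E; apply: (@root_excl z zP).
have : z = - a by rewrite -[z](reflK aPhi) E refl_self // Phi_nz.
by move=> ->; rewrite /negroot opprK.
Qed.


Lemma Ncount1 : Ncount 1%:M = 0%N.
Proof.
rewrite /Ncount (@eq_in_count _ _ pred0) ?count_pred0 // => b bP /=.
rewrite trmx1 mul1mx; apply/negP => nb; exact: root_excl bP nb.
Qed.

Lemma subDP (s : seq V) : {subset s <= Delta} -> {subset s <= Phi}.
Proof. by move=> H x xs; apply: Delta_Phi; apply: H. Qed.

Lemma N_upper s : {subset s <= Delta} -> (Ncount (prod_refl s) <= size s)%N.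
Proof.
elim: s => [|a s IH] sub; first by rewrite Ncount1.
have aD : a \in Delta by apply: sub; rewrite mem_head.
have subD := sub_tail sub.
have h1 := IH subD; have h2 := N_step aD (subDP subD); rewrite -prod_cons in h2.
change (size (a :: s)) with (size s).+1.
move: h2; case: (negroot _ _ _) => /= h2.
  by rewrite !addn1 in h2; case: h2 => h2; rewrite leqW // ltnW // h2.
by rewrite !addn0 in h2; rewrite h2.
Qed.

Lemma deletion s : {subset s <= Delta} -> forall c, c \in P ->
  negroot Phi Delta ((prod_refl s)^T *m c) ->
  exists t, [/\ {subset t <= Delta}, (size t < size s)%N & refl c *m prod_refl s = prod_refl t].
Proof.
elim: s => [|b s IH] sub c cP nc.
  by exfalso; move: nc; rewrite /= trmx1 mul1mx => nc; exact: root_excl cP nc.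
have bD : b \in Delta by apply: sub; rewrite mem_head.
have bPhi := Delta_Phi bD; have subD := sub_tail sub.
move: nc; rewrite prod_cons trmx_mul refl_sym -mulmxA => nc.
case: (eqVneq c b) => [->|cb].
  by exists s; split => //; rewrite mulmxA (refl_inv (Phi_nz bPhi)) mul1mx.
have c'P := simple_refl_pos bD cP cb.
have [t [tD tsz tE]] := IH subD _ c'P nc.
exists (b :: t); split => //.
- by move=> x; rewrite inE => /orP[/eqP->|]; [exact: bD | exact: tD].
rewrite prod_cons -tE refl_conj ?(Phi_nz bPhi) // !mulmxA (refl_inv (Phi_nz bPhi)) mul1mx.
by [].
Qed.

Lemma shorten s : {subset s <= Delta} -> (Ncount (prod_refl s) < size s)%N ->
  exists t, [/\ {subset t <= Delta}, (size t < size s)%N & prod_refl s = prod_refl t].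
Proof.
elim: s => [|a s IH] sub lt; first by rewrite ltn0 in lt.
have aD : a \in Delta by apply: sub; rewrite mem_head.
have subD := sub_tail sub.
case: (ltnP (Ncount (prod_refl s)) (size s)) => [lt'|ge'].
  have [t [tD tsz tE]] := IH subD lt'.
  exists (a :: t); split => //.
  - by move=> x; rewrite inE => /orP[/eqP->|]; [exact: aD | exact: tD].
  - by rewrite prod_cons tE.
have eqN : Ncount (prod_refl s) = size s.
  by apply/eqP; rewrite eqn_leq ge' N_upper.
move: lt; rewrite ?prod_cons; change (size (a :: s)) with (size s).+1 => lt.
have nq : negroot Phi Delta ((prod_refl s)^T *m a).
  move: (N_step aD (subDP subD)) lt; rewrite eqN.
  case: (negroot _ _ _) => //=; lia.
have [t [tD tsz tE]] := deletion subD (Delta_P aD) nq.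
exists t; split => //.
by rewrite ltnS ltnW.
Qed.

Lemma length_N x k : weyl_length Delta x k -> Ncount x = k.
Proof.
case=> [[s [sD [sz xE]]] minl].
apply/eqP; rewrite eqn_leq; apply/andP; split.
  by rewrite xE -sz N_upper.
rewrite leqNgt; apply/negP => lt.
have lt' : (Ncount (prod_refl s) < size s)%N by rewrite -xE sz.
have [t [tD tsz tE]] := shorten sD lt'.
have := minl t tD (etrans xE tE).
by rewrite -sz => h; have := leq_ltn_trans h tsz; rewrite ltnn.
Qed.


Lemma sum_nseq k (x : V) : \sum_(y <- nseq k x) y = x *+ k.
Proof. elim: k => [|k IH]; first by rewrite big_nil. by rewrite /= big_cons IH mulrS. Qed.

Lemma not_pos_neg b : b \in Phi -> ~~ (b \in P) -> negroot Phi Delta b.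
Proof. by move=> bP; case/orP: (root_dich bP) => [->|]. Qed.

Lemma main2 (h : pred V) (al : V) (sw : seq V) :
  hessenberg Phi Delta h -> al \in P -> {subset sw <= Delta} ->
  (prod_refl sw)^T *m al \in P ->
  Ncount (refl al *m prod_refl sw) = (Ncount (prod_refl sw)).+1 ->
  (count (fun b => h (- ((prod_refl sw)^T *m (refl al *m b)))) P
     <= count (fun b => h (- ((prod_refl sw)^T *m b))) P + 1)%N.
Proof.
move=> [hP hup] alP swD pwa Nvw.
set w := prod_refl sw in pwa Nvw *.
have swP := subDP swD; have alPhi := P_Phi alP; have nzal := Phi_nz alPhi.
pose sa := fun b : V => refl al *m b.
have saK : cancel sa sa := reflK alPhi.
have WPhi b : b \in Phi -> w^T *m b \in Phi := word_tr_Phi swP.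
have saPhi b : b \in Phi -> sa b \in Phi := Phi_refl alPhi.
pose g := fun b => negroot Phi Delta (w^T *m b).
pose pw := fun b => w^T *m b \in P.
pose rho := fun b => - sa b.
have rhoK : cancel rho rho by move=> b; rewrite /rho /sa mulmxN opprK (reflK alPhi).
pose Dp := fun b => negroot Phi Delta (sa b).
pose D := filter Dp P; pose C := filter (predC Dp) P.
have uD : uniq D := filter_uniq _ uniqP.
have uC : uniq C := filter_uniq _ uniqP.
have splitCD (p : pred V) : (count p P = count p D + count p C)%N.
  by rewrite /D /C (count_filter p Dp P) (count_filter p (predC Dp) P); exact: (count_split p Dp P).
have memC b : (b \in C) = ~~ Dp b && (b \in P) by rewrite /C mem_filter.
have memD b : (b \in D) = Dp b && (b \in P) by rewrite /D mem_filter.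
have clC b : b \in C -> sa b \in C.
  rewrite !memC => /andP[nD bP].
  have sbPhi := saPhi _ (P_Phi bP).
  have sP : sa b \in P by move: (root_dich sbPhi) nD; rewrite /Dp; case/orP => // ->.
  rewrite sP andbT /Dp /sa (reflK alPhi); apply/negP => nb; exact: root_excl bP nb.
have clD b : b \in D -> rho b \in D.
  rewrite !memD => /andP[nD bP]; apply/andP; split => //.
  by rewrite /Dp /negroot /rho /sa mulmxN opprK (reflK alPhi).
have DP b : b \in D -> b \in P by rewrite memD => /andP[].
have DDp b : b \in D -> Dp b by rewrite memD => /andP[].
have E1 : Ncount (refl al *m w) = count (fun b => g (sa b)) P.
  by apply: eq_count => b; rewrite /= /g /sa trmx_mul refl_sym mulmxA.
have cgC : count (fun b => g (sa b)) C = count g C by apply: count_inv.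
have cgD : count (fun b => g (sa b)) D = count pw D.
  rewrite -(@count_inv _ rho D pw) //; apply: eq_count => b.
  by rewrite /g /pw /rho /negroot mulmxN.
have Nw : Ncount w = count g P by [].
move: Nvw; rewrite E1 Nw !splitCD cgC cgD => Nvw.
have pwg : (count pw D + count g D = size D)%N.
  rewrite -(count_predC pw D); congr (_ + _)%N; apply: eq_in_count => b bD /=.
  have bPhi := WPhi _ (P_Phi (DP _ bD)).
  move: (root_dich bPhi) (@root_excl (w^T *m b)); rewrite /g /pw.
  by case: (w^T *m b \in P); case: (negroot _ _ _) => //= _ H; exfalso; apply: H.
have kdec b : b \in D -> exists k : nat, (0 < k)%N /\
    w^T *m rho b = k%:R *: (w^T *m al) - w^T *m b.
  move=> bD; have [k [k0 kE]] := refl_neg_k alP (DP _ bD) (DDp _ bD).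
  exists k; split => //; rewrite /rho /sa kE mulmxN mulmxBr -scalemxAr.
  by rewrite opprB.
have nbn b : b \in D -> pw b || pw (rho b).
  move=> bD; have [k [k0 kE]] := kdec b bD.
  apply/negPn/negP; rewrite negb_or => /andP[n1 n2].
  have bPhi := WPhi _ (P_Phi (DP _ bD)).
  have rPhi : w^T *m rho b \in Phi.
    apply: WPhi; apply: P_Phi; apply: DP; exact: clD.
  have m1 : negroot Phi Delta (w^T *m b) by apply: not_pos_neg.
  have m2 : negroot Phi Delta (w^T *m rho b) by apply: not_pos_neg.
  have p1 := is_pos_add (P_pos m1) (P_pos m2).
  have p2 := is_pos_nat k (P_pos pwa).
  move: p1; rewrite kE opprB addrA addNr add0r => p1.
  have z := pos_neg0 p2 p1.
  move: z => /eqP; rewrite scaler_eq0 pnatr_eq0 => /orP[/eqP k00|/eqP wa0].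
    by move: k0; rewrite k00.
  by move: (P_Phi pwa); rewrite wa0; move/negP: zeroNPhi.
pose pwr := fun b => pw (rho b).
have cpr : count pwr D = count pw D by apply: count_inv.
have cU : count (predU pw pwr) D = size D.
  rewrite -count_predT; apply: eq_in_count => b bD /=; exact: nbn.
have cE := count_predUI pw pwr D.
rewrite cU cpr in cE.
have cI : count (predI pw pwr) D = 1%N.
  move: Nvw pwg cE.
  set a1 := count pw D; set a2 := count g D; set a3 := count g C.
  set a4 := size D; set a5 := count (predI pw pwr) D; lia.
have alD : al \in D.
  rewrite memD alP andbT /Dp /negroot /sa refl_self // opprK //.
have Eal : predI pw pwr al.
  by rewrite /= /pwr /pw /rho /sa refl_self // opprK pwa.
have uniqE b : b \in D -> predI pw pwr b -> b = al.
  move=> bD Eb; apply/eqP; apply/negP => /negP ba.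
  move: cI; rewrite (count_rem _ alD) Eal.
  have : b \in rem al D by rewrite mem_rem_uniq // inE ba.
  move=> brem; have : has (predI pw pwr) (rem al D) by apply/hasP; exists b.
  by rewrite has_count; case: count.
pose f := fun b => h (- (w^T *m b)).
rewrite -/f.
change (count (fun b => f (sa b)) D + count (fun b => f (sa b)) C <= count f D + count f C + 1)%N.
rewrite (@count_inv _ sa C f) //.
have key : (count (fun b => f (sa b)) D <= count f D + 1)%N.
  apply: (@leq_trans (count (predU f (pred1 al)) D)).
    apply: sub_in_count => b bD fsb /=.
    case: (eqVneq b al) => [->|ba]; first by rewrite orbT.
    rewrite orbF.
    have [k [k0 kE]] := kdec b bD.
    have fr : h (w^T *m rho b) by move: fsb; rewrite /f /rho mulmxN.
    have prP : pw (rho b) by apply: hP.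
    have npw : ~~ pw b.
      apply/negP => pb; move/eqP: ba; apply; apply: (uniqE _ bD).
      by apply/andP; split; [exact: pb | exact: prP].
    have bPhi := WPhi _ (P_Phi (DP _ bD)).
    have ng : - (w^T *m b) \in P by apply: not_pos_neg.
    apply/negPn/negP => nh.
    have pr : prec Phi Delta (- (w^T *m b)) (w^T *m rho b).
      exists (nseq k (w^T *m al)); split.
        by move=> x; rewrite mem_nseq => /andP[_ /eqP ->].
      by rewrite sum_nseq kE opprK -scaler_nat addrNK.
    by move: (hup _ (w^T *m rho b) ng prP nh pr); rewrite fr.
  have h1 := count_predUI f (pred1 al) D.
  have h2 : count (pred1 al) D = 1%N by rewrite (count_uniq_mem _ uD) alD.
  rewrite h2 in h1; rewrite -h1; exact: leq_addr.
by rewrite addnAC leq_add2r.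
Qed.


Lemma invmx_word s : {subset s <= Phi} -> invmx (prod_refl s) = (prod_refl s)^T.
Proof.
move=> sP; have o := word_orth sP.
have o' := mulmx1C o.
have [_ u] := mulmx1_unit o.
by rewrite -[invmx _]mulmx1 -o' mulmxA (mulVmx u) mul1mx.
Qed.

Lemma goal1 (h : pred V) (x : 'M[R]_n) (s : seq V) : {subset s <= Phi} ->
  x = prod_refl s ->
  (count (fun b => negroot Phi Delta (x^T *m b)) P <=
     count (fun b => h (- (x^T *m b))) P + count (predC h) P)%N.
Proof.
move=> sP xE.
pose g := fun b => negroot Phi Delta (x^T *m b).
pose f := fun b => h (- (x^T *m b)).
rewrite (count_split _ f P).
apply: leq_add; first by apply: sub_count => b /andP[].
pose phi := fun b : V => - (x^T *m b).
have xo : x *m x^T = 1%:M by rewrite xE; apply: mulmx1C; apply: word_orth.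
have inj : injective phi.
  move=> b1 b2 /oppr_inj E.
  by rewrite -[b1]mul1mx -[b2]mul1mx -xo -!mulmxA E.
rewrite -!size_filter.
rewrite -[X in (X <= _)%N](size_map phi); apply: uniq_leq_size.
  by rewrite (map_inj_uniq inj); apply: filter_uniq; apply: uniqP.
move=> y /mapP[b]; rewrite mem_filter => /andP[/andP[gb nfb] bP] ->.
rewrite mem_filter; apply/andP; split => //.
Qed.

End RS.

Unset Implicit Arguments.

Theorem corollary2p11 (R : realType) (n : nat) (Phi Delta : seq 'cV[R]_n)
  (h : pred 'cV[R]_n) (v w : 'M[R]_n) :
  root_system Phi -> is_base Phi Delta -> hessenberg Phi Delta h ->
  in_weyl Phi v -> in_weyl Phi w -> is_cover Phi Delta v w ->
  (size (Nset Phi Delta v))%:Z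
    - (size [seq b <- posroots Phi Delta | ~~ h b])%:Z
    <= (size (Nhset Phi Delta h v))%:Z
  /\ (size (Nhset Phi Delta h v) <= size (Nhset Phi Delta h w) + 1)%N.
Proof.
move=> RS BS hH _ _ [a [aP vE nva [k [lw lv]]]].
have [[sw [swD [_ wE]]] _] := lw.
have [[sv [svD [_ vE']]] _] := lv.
have swP := subDP BS swD; have svP := subDP BS svD.
have aPhi := P_Phi aP.
have ivE : invmx v = v^T by rewrite vE' (invmx_word RS svP).
split.
  rewrite lerBlDr -PoszD lez_nat /Nset /Nhset !size_filter ivE.
  exact: (goal1 Delta RS h svP vE').
have vtE : v^T = w^T *m refl a by rewrite vE trmx_mul refl_sym.
have iwE : invmx w = w^T by rewrite wE (invmx_word RS swP).
rewrite /Nhset !size_filter ivE vtE iwE.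
have pwa : w^T *m a \in posroots Phi Delta.
  move: nva; rewrite ivE vtE -mulmxA (refl_self (Phi_nz RS aPhi)) mulmxN.
  by rewrite /negroot opprK.
have Nv := length_N RS BS lv; have Nw := length_N RS BS lw.
have Nvw : Ncount Phi Delta (refl a *m prod_refl sw) = (Ncount Phi Delta (prod_refl sw)).+1.
  by rewrite -wE -vE Nv Nw.
have pwa' : (prod_refl sw)^T *m a \in posroots Phi Delta by rewrite -wE.
have := main2 RS BS hH aP swD pwa' Nvw.
rewrite -wE.
have -> : count (fun b => h (- (w^T *m refl a *m b))) (posroots Phi Delta) =
  count (fun b => h (- (w^T *m (refl a *m b)))) (posroots Phi Delta).
  by apply: eq_count => b; rewrite /= mulmxA.
by [].
Qed.
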